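(* Let $G$ be a $(P_7, C_4, \text{gem})$-free graph that contains a $7$-hole $C$. Then some vertex of $C$ is a bisimplicial vertex of $G$.
   Context: All graphs are finite and simple. $G$ is $H$-free if it has no induced subgraph isomorphic to $H$; $P_t$, $C_t$ are the path and cycle on $t$ vertices; a gem is an induced $P_4$ plus a vertex adjacent to all four of its vertices. A $k$-hole is an induced cycle of length $k$. A vertex is bisimplicial if its neighbourhood is the union of two cliques. *)

(* Defs.v *)
From mathcomp Require Import all_boot.
Set Implicit Arguments. Unset Strict Implicit. Unset Printing Implicit Defensive.


Definition simple_graph (T : finType) (e : rel T) : Prop :=
  symmetric e /\ irreflexive e.

Definition path_adj (t : nat) : rel 'I_t :=
  fun i j => (i.+1 == j :> nat) || (j.+1 == i :> nat).
Definition cycle_adj (t : nat) : rel 'I_t :=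
  fun i j => (i.+1 %% t == j :> nat) || (j.+1 %% t == i :> nat).
Definition gem_adj : rel 'I_5 :=
  fun i j => ((i < 4) && (j < 4) && path_adj (i : 'I_5) j)
          || ((i == 4 :> nat) && (j < 4)) || ((j == 4 :> nat) && (i < 4)).

Definition induced_copy (T : finType) (e : rel T) (k : nat) (h : rel 'I_k)
    (f : 'I_k -> T) : Prop :=
  injective f /\ forall i j : 'I_k, e (f i) (f j) = h i j.

Definition H_free (T : finType) (e : rel T) (k : nat) (h : rel 'I_k) : Prop :=
  forall f : 'I_k -> T, ~ induced_copy e h f.

Definition clique (T : finType) (e : rel T) (A : {set T}) : Prop :=
  forall x y, x \in A -> y \in A -> x != y -> e x y.

Definition nbhd (T : finType) (e : rel T) (v : T) : {set T} := [set u | e v u].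

Definition bisimplicial (T : finType) (e : rel T) (v : T) : Prop :=
  exists A B : {set T}, clique e A /\ clique e B /\ nbhd e v = A :|: B.
Arguments path_adj t : clear implicits.
Arguments cycle_adj t : clear implicits.

(* Main.v *)
Require Import Defs.
From mathcomp Require Import all_boot.
Set Implicit Arguments. Unset Strict Implicit. Unset Printing Implicit Defensive.


Definition hP7 (i j : nat) : bool := (i.+1 == j) || (j.+1 == i).
Definition hC4 (i j : nat) : bool := (i.+1 %% 4 == j) || (j.+1 %% 4 == i).
Definition hgem (i j : nat) : bool :=
  ((i < 4) && (j < 4) && hP7 i j) || ((i == 4) && (j < 4)) || ((j == 4) && (i < 4)).
Definition cyc7 (a b : nat) : bool := (a.+1 == b) || (b.+1 == a) || ((a == 0) && (b == 6)) || ((a == 6) && (b == 0)).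

Definition pat (s t : seq bool) (bb : bool) (a b : nat) : bool :=
  if a < 7 then (if b < 7 then cyc7 a b else if b == 7 then nth false s a else nth false t a)
  else if a == 7 then (if b < 7 then nth false s b else if b == 7 then false else bb)
  else (if b < 7 then nth false t b else if b == 7 then bb else false).

Definition ext (h : nat -> nat -> bool) n (M : nat -> nat -> bool) (l : seq nat) : seq (seq nat) :=
  [seq rcons l v | v <- iota 0 n &
     (v \notin l) && all (fun j => M (nth 0 l j) v == h j (size l)) (iota 0 (size l))].
Definition cands k h n M := iter k (fun ls => flatten (map (ext h n M) ls)) [:: [::]].
Definition has_copy k h n M := cands k h n M != [::].
Definition free n M := ~~ has_copy 7 hP7 n M && ~~ has_copy 4 hC4 n M && ~~ has_copy 5 hgem n M.

Fixpoint bseqs n : seq (seq bool) :=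
  if n is n'.+1 then [seq b :: s | b <- [:: true; false], s <- bseqs n'] else [:: [::]].

Definition VT := [seq s <- bseqs 7 | free 8 (pat s [::] false)].
Definition mkFL (vt : seq (seq bool)) :=
  [seq x <- flatten [seq [seq (s, t, b) | t <- vt, b <- [:: true; false]] | s <- vt] | free 9 (pat x.1.1 x.1.2 x.2)].
Definition FL := mkFL VT.

Definition il (i : nat) := (i + 6) %% 7.
Definition ir (i : nat) := i.+1 %% 7.
Definition pendb (i : nat) (s : seq bool) :=
  nth false s i && ~~ nth false s (il i) && ~~ nth false s (ir i).
Definition clq (j i : nat) (s : seq bool) := nth false s i && nth false s j.
Definition clique_checks (fl : seq (seq bool * seq bool * bool)) :=
  all (fun x => all (fun i =>
      ((clq (il i) i x.1.1 && clq (il i) i x.1.2) ==> x.2) &&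
      ((clq (ir i) i x.1.1 && clq (ir i) i x.1.2) ==> x.2)) (iota 0 7)) fl.
Definition compat (fl : seq (seq bool * seq bool * bool)) (s t : seq bool) :=
  (s == t) || ((s, t, true) \in fl) || ((s, t, false) \in fl).
Fixpoint srch fl (ps : seq (seq (seq bool))) (chosen : seq (seq bool)) : bool :=
  if ps is P :: ps' then
    has (fun s => if all (compat fl s) chosen then srch fl ps' (s :: chosen) else false) P
  else true.
Definition all_checks (vt : seq (seq bool)) (fl : seq (seq bool * seq bool * bool)) :=
  clique_checks fl && ~~ srch fl [seq [seq s <- vt | pendb i s] | i <- iota 0 7] [::].
Arguments VT : simpl never.
Arguments FL : simpl never.


Lemma cands_sound k h n M l : l \in cands k h n M ->
  [/\ size l = k, uniq l, all (fun v => v < n) l &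
      forall i j, i < j -> j < k -> M (nth 0 l i) (nth 0 l j) = h i j].
Proof.
elim: k l => [|k IH] l.
  by rewrite /cands /= inE => /eqP ->; split => // i j ij; rewrite ltn0.
rewrite /cands iterS -/(cands k h n M) => /flatten_mapP [l0 /IH [s0 u0 a0 h0]].
rewrite /ext => /mapP [v]; rewrite mem_filter mem_iota /= add0n.
case/andP => /andP [vl /allP vh] vn ->; split.
- by rewrite size_rcons s0.
- by rewrite rcons_uniq vl u0.
- by rewrite all_rcons vn a0.
move=> i j ij; rewrite ltnS leq_eqVlt => /orP [/eqP jk | jk].
  have ik : i < size l0 by rewrite s0 -jk.
  rewrite !nth_rcons ik s0 jk ltnn eqxx.
  have := vh i; rewrite mem_iota /= add0n ik s0 => /(_ isT) /eqP //.
rewrite !nth_rcons s0 jk (ltn_trans ij jk); exact: h0.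
Qed.

Lemma copy_contra (T : finType) (e : rel T) k (h : rel 'I_k) (hn : nat -> nat -> bool) n (vs : seq T) (x0 : T) P :
  simple_graph e -> (forall i j : 'I_k, h i j = hn i j) -> (forall i : 'I_k, hn i i = false) ->
  (forall i j : 'I_k, hn i j = hn j i) ->
  uniq vs -> size vs = n ->
  (forall a b, a < n -> b < n -> e (nth x0 vs a) (nth x0 vs b) = P a b) ->
  H_free e h -> ~~ has_copy k hn n P.
Proof.
move=> [sy irr] hh hd hs uv sv hP hf; apply/negP; rewrite /has_copy.
case E: (cands k hn n P) => [|l ls] //= _.
have /cands_sound [sl ul al hl] : l \in cands k hn n P by rewrite E inE eqxx.
have lt_n : forall i : 'I_k, nth 0 l i < n.
  by move=> i; apply: (allP al); apply: mem_nth; rewrite sl.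
pose f := fun i : 'I_k => nth x0 vs (nth 0 l i).
apply: (hf f); split.
- move=> i j; rewrite /f => /eqP; rewrite nth_uniq ?sv ?lt_n // nth_uniq ?sl //.
  by move/eqP/val_inj.
move=> i j; rewrite hh.
case: (ltngtP i j) => [ij|ji|ij].
- by rewrite /f hP ?lt_n // hl.
- by rewrite sy /f hP ?lt_n // hl // hs.
- by move/val_inj: ij => ->; rewrite irr hd.
Qed.


Lemma K1 i : i < 7 -> [&& cyc7 i (il i), cyc7 i (ir i), il i < 7 & ir i < 7].
Proof. by do 7?[case: i => [|i] //]. Qed.
Lemma K2 i j : i < 7 -> j < 7 -> cyc7 i j -> (j == il i) || (j == ir i).
Proof. by do 7?[case: i => [|i] //]; do 7?[case: j => [|j] //]. Qed.
Lemma K3 i j : i < 7 -> j < 7 -> ~~ (cyc7 i j && cyc7 j (il i)) && ~~ (cyc7 i j && cyc7 j (ir i)).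
Proof. by do 7?[case: i => [|i] //]; do 7?[case: j => [|j] //]. Qed.
Lemma cycE (i j : 'I_7) : cycle_adj 7 i j = cyc7 i j.
Proof. by case: i j => [i hi] [j hj] /=; rewrite /cycle_adj /=; do 7?[case: i hi => [|i] hi //]; do 7?[case: j hj => [|j] hj //]. Qed.


Definition cc (T : finType) (c : 'I_7 -> T) (j : nat) : T := c (inord j).
Definition outside (T : finType) (c : 'I_7 -> T) (x : T) := [forall j : 'I_7, x != c j].
Definition tr (T : finType) (e : rel T) (c : 'I_7 -> T) (x : T) :=
  [seq e x (cc c j) | j <- iota 0 7].
Definition vsL (T : finType) (c : 'I_7 -> T) (xs : seq T) := [seq cc c j | j <- iota 0 7] ++ xs.

Lemma trE (T : finType) (e : rel T) c x j : j < 7 -> nth false (tr e c x) j = e x (cc c j).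
Proof. by move=> hj; rewrite (nth_map 0) ?size_iota // nth_iota. Qed.

Lemma size_tr (T : finType) (e : rel T) c x : size (tr e c x) = 7.
Proof. by rewrite size_map size_iota. Qed.

Lemma nth_vsL (T : finType) (c : 'I_7 -> T) xs x0 a :
  nth x0 (vsL c xs) a = if a < 7 then cc c a else nth x0 xs (a - 7).
Proof.
rewrite /vsL nth_cat size_map size_iota; case: ifP => // ha.
by rewrite (nth_map 0) ?size_iota // nth_iota.
Qed.

Lemma ccE (T : finType) (e : rel T) c : induced_copy e (cycle_adj 7) c ->
  forall a b, a < 7 -> b < 7 -> e (cc c a) (cc c b) = cyc7 a b.
Proof. by move=> [_ hc] a b ha hb; rewrite /cc hc cycE !inordK. Qed.

Lemma cc_inj (T : finType) (e : rel T) c : induced_copy e (cycle_adj 7) c ->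
  forall a b, a < 7 -> b < 7 -> cc c a = cc c b -> a = b.
Proof.
move=> [ci _] a b ha hb /ci /(congr1 (@nat_of_ord 7)); by rewrite !inordK.
Qed.

Lemma out_cc (T : finType) (c : 'I_7 -> T) (x : T) j : outside c x -> j < 7 -> x != cc c j.
Proof. by move=> /forallP h _; apply: h. Qed.

Lemma uniq_vsL (T : finType) (e : rel T) c xs : induced_copy e (cycle_adj 7) c ->
  uniq xs -> all (outside c) xs -> uniq (vsL c xs).
Proof.
move=> hc uxs oxs; rewrite /vsL cat_uniq uxs andbT; apply/andP; split.
  rewrite map_inj_in_uniq ?iota_uniq // => a b; rewrite !mem_iota /= !add0n.
  exact: cc_inj hc a b.
apply/hasPn => x /(allP oxs) ox; apply/mapP => [[j]]; rewrite mem_iota add0n /= => hj.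
by apply/eqP; apply: out_cc ox hj.
Qed.

Lemma split9 a : a < 9 -> [\/ a < 7, a = 7 | a = 8].
Proof. do 9?[case: a => [|a] //]. all: by move=> _; constructor. Qed.

Lemma split8 a : a < 8 -> a < 7 \/ a = 7.
Proof. do 8?[case: a => [|a] //]. all: by move=> _; constructor. Qed.

Lemma pat_agree9 (T : finType) (e : rel T) c x y : simple_graph e ->
  induced_copy e (cycle_adj 7) c ->
  forall a b, a < 9 -> b < 9 ->
  e (nth x (vsL c [:: x; y]) a) (nth x (vsL c [:: x; y]) b) = pat (tr e c x) (tr e c y) (e x y) a b.
Proof.
move=> [sy irr] hc a b ha hb; rewrite !nth_vsL /pat.
case: (split9 ha) => [a7|->|->]; case: (split9 hb) => [b7|->|->];
  rewrite ?a7 ?b7 /= ?trE ?irr //; try exact: ccE; by rewrite sy.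
Qed.

Lemma pat_agree8 (T : finType) (e : rel T) c x : simple_graph e ->
  induced_copy e (cycle_adj 7) c ->
  forall a b, a < 8 -> b < 8 ->
  e (nth x (vsL c [:: x]) a) (nth x (vsL c [:: x]) b) = pat (tr e c x) [::] false a b.
Proof.
move=> [sy irr] hc a b ha hb; rewrite !nth_vsL /pat.
case: (split8 ha) => [a7|->]; case: (split8 hb) => [b7|->];
  rewrite ?a7 ?b7 /= ?trE ?irr //; try exact: ccE; by rewrite sy.
Qed.

Lemma free_of (T : finType) (e : rel T) n (vs : seq T) x0 P :
  simple_graph e -> H_free e (path_adj 7) -> H_free e (cycle_adj 4) -> H_free e gem_adj ->
  uniq vs -> size vs = n ->
  (forall a b, a < n -> b < n -> e (nth x0 vs a) (nth x0 vs b) = P a b) -> free n P.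
Proof.
move=> hs h1 h2 h3 u s hP; rewrite /free.
have a1 : forall i j : 'I_7, path_adj 7 i j = hP7 i j by [].
have a2 : forall i : 'I_7, hP7 i i = false by move=> i; rewrite /hP7 gtn_eqF // ltn_eqF.
have a3 : forall i j : 'I_7, hP7 i j = hP7 j i by move=> i j; rewrite /hP7 orbC.
have b1 : forall i j : 'I_4, cycle_adj 4 i j = hC4 i j by [].
have b2 : forall i : 'I_4, hC4 i i = false by case=> [[|[|[|[|i]]]] hi].
have b3 : forall i j : 'I_4, hC4 i j = hC4 j i by move=> i j; rewrite /hC4 orbC.
have c1 : forall i j : 'I_5, gem_adj i j = hgem i j by [].
have c2 : forall i : 'I_5, hgem i i = false by case=> [[|[|[|[|[|i]]]]] hi].
have c3 : forall i j : 'I_5, hgem i j = hgem j i.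
  by case=> [[|[|[|[|[|i]]]]] hi] [[|[|[|[|[|j]]]]] hj].
by rewrite (copy_contra hs a1 a2 a3 u s hP h1) (copy_contra hs b1 b2 b3 u s hP h2)
  (copy_contra hs c1 c2 c3 u s hP h3).
Qed.

Lemma VT_mem (T : finType) (e : rel T) c x :
  simple_graph e -> H_free e (path_adj 7) -> H_free e (cycle_adj 4) -> H_free e gem_adj ->
  induced_copy e (cycle_adj 7) c -> outside c x -> tr e c x \in VT.
Proof.
move=> hs h1 h2 h3 hc ox; rewrite /VT mem_filter; apply/andP; split.
  apply: (free_of (vs := vsL c [:: x]) (x0 := x) hs h1 h2 h3).
  - by apply: (uniq_vsL hc) => //=; rewrite ox.
  - by rewrite size_cat size_map size_iota.
  - exact: pat_agree8.
have : size (tr e c x) = 7 by apply: size_tr.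
elim: 7 (tr e c x) => [|n IH] [|b s] //= [hs'].
by case: b; rewrite !mem_cat map_f ?orbT ?IH.
Qed.

Lemma pair_FL (T : finType) (e : rel T) c x y :
  simple_graph e -> H_free e (path_adj 7) -> H_free e (cycle_adj 4) -> H_free e gem_adj ->
  induced_copy e (cycle_adj 7) c -> outside c x -> outside c y -> x != y ->
  (tr e c x, tr e c y, e x y) \in FL.
Proof.
move=> hs h1 h2 h3 hc ox oy xy; rewrite /FL /mkFL mem_filter; apply/andP; split.
  apply: (free_of (vs := vsL c [:: x; y]) (x0 := x) hs h1 h2 h3).
  - by apply: (uniq_vsL hc); rewrite /= ?inE ?ox ?oy ?xy.
  - by rewrite size_cat size_map size_iota.
  - exact: pat_agree9.
apply/flatten_mapP; exists (tr e c x); first exact: VT_mem.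
by apply: allpairs_f; [exact: VT_mem | case: (e x y)].
Qed.

Lemma compat_tr (T : finType) (e : rel T) c x y :
  simple_graph e -> H_free e (path_adj 7) -> H_free e (cycle_adj 4) -> H_free e gem_adj ->
  induced_copy e (cycle_adj 7) c -> outside c x -> outside c y ->
  compat FL (tr e c x) (tr e c y).
Proof.
move=> hs h1 h2 h3 hc ox oy; rewrite /compat.
case: (eqVneq x y) => [->|xy]; first by rewrite eqxx.
have := pair_FL hs h1 h2 h3 hc ox oy xy.
by case: (e x y) => ->; rewrite ?orbT.
Qed.

Lemma srch_complete fl ps : forall chosen ls,
  all2 (fun s P => s \in P) ls ps ->
  (forall a b, a \in chosen ++ ls -> b \in chosen ++ ls -> compat fl a b) ->
  srch fl ps chosen.
Proof.
elim: ps => [|P ps IH] chosen [|s ls] //= /andP [sP hls] hc.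
apply/hasP; exists s => //.
have -> : all (compat fl s) chosen.
  by apply/allP => a ha; apply: hc; rewrite mem_cat ?inE ?eqxx ?ha ?orbT.
have mv z : z \in (s :: chosen) ++ ls -> z \in chosen ++ s :: ls.
  by rewrite !mem_cat !inE => /orP[/orP[->|->]|->]; rewrite ?orbT.
by apply: (IH _ ls hls) => a b /mv ha /mv hb; apply: hc.
Qed.


Lemma AC : all_checks VT FL = true.
Proof. vm_cast_no_check (erefl true). Qed.

Lemma AC1 : clique_checks FL.
Proof. by move: AC; rewrite /all_checks => /andP []. Qed.

Lemma AC2 : ~~ srch FL [seq [seq s <- VT | pendb i s] | i <- iota 0 7] [::].
Proof. by move: AC; rewrite /all_checks => /andP []. Qed.

Lemma cc_val (T : finType) (c : 'I_7 -> T) (j : 'I_7) : c j = cc c j.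
Proof. by rewrite /cc inord_val. Qed.

Lemma cc_eq (T : finType) (e : rel T) c a b : induced_copy e (cycle_adj 7) c ->
  a < 7 -> b < 7 -> (cc c a == cc c b) = (a == b).
Proof.
move=> hc ha hb; apply/eqP/eqP => [|->] //; exact: cc_inj hc a b ha hb.
Qed.

Lemma not_out (T : finType) (c : 'I_7 -> T) x : ~~ outside c x -> exists2 j, j < 7 & x = cc c j.
Proof.
by move/forallPn => [j]; rewrite negbK => /eqP ->; exists j => //; rewrite cc_val.
Qed.

Lemma in_PC i s : pendb i s -> s \in VT -> s \in [seq t <- VT | pendb i t].
Proof. by move=> h1 h2; rewrite mem_filter h1 h2. Qed.

Theorem mainTheorem10 (T : finType) (e : rel T) :
  simple_graph e ->
  H_free e (path_adj 7) ->
  H_free e (cycle_adj 4) ->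
  H_free e gem_adj ->
  forall c : 'I_7 -> T, induced_copy e (cycle_adj 7) c ->
  exists i : 'I_7, bisimplicial e (c i).
Proof.
move=> hs h1 h2 h3 c hc; have [sy irr] := hs.
case: (boolP [exists i : 'I_7, [forall p, outside c p ==> ~~ pendb i (tr e c p)]]) =>
  [/existsP [i /forallP Hi] | Hne].
- exists i; rewrite cc_val; move: Hi; case: i => k hk /= Hi.
  case/and4P: (K1 hk) => kl kr hl hr.
  have outl x : e (cc c k) x -> e x (cc c (il k)) -> outside c x.
    move=> h1x h2x; apply/negPn/negP => /not_out [j hj ej]; move: h1x h2x.
    rewrite ej (ccE hc hk hj) ?(ccE hc hj hl) ?(ccE hc hj hr) => a b.
    by case/andP: (K3 hk hj); rewrite a b.
  have outr x : e (cc c k) x -> e x (cc c (ir k)) -> outside c x.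
    move=> h1x h2x; apply/negPn/negP => /not_out [j hj ej]; move: h1x h2x.
    rewrite ej (ccE hc hk hj) ?(ccE hc hj hl) ?(ccE hc hj hr) => a b.
    by case/andP: (K3 hk hj); rewrite a b.
  have clqP j x y : j \in [:: il k; ir k] -> j < 7 ->
      e (cc c k) x -> e x (cc c j) -> e (cc c k) y -> e y (cc c j) ->
      outside c x -> outside c y -> x != y -> e x y.
    move=> hjin hj a1 a2 b1 b2 ox oy xy.
    have hF := pair_FL hs h1 h2 h3 hc ox oy xy.
    have /allP/(_ k) := allP AC1 _ hF; clear hF; rewrite mem_iota add0n hk => /(_ isT); cbn [fst snd] => /andP [q1 q2].
    move: hjin; rewrite !inE => /orP [/eqP ej|/eqP ej]; subst j.
    + apply: (implyP q1). rewrite /clq. rewrite !(trE _ _ _ hk). rewrite !(trE _ _ _ hl).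
      rewrite (sy x (cc c k)) (sy y (cc c k)). by rewrite a1 a2 b1 b2.
    + apply: (implyP q2). rewrite /clq. rewrite !(trE _ _ _ hk). rewrite !(trE _ _ _ hr).
      rewrite (sy x (cc c k)) (sy y (cc c k)). by rewrite a1 a2 b1 b2.
  exists [set x | (x == cc c (il k)) || (e (cc c k) x && e x (cc c (il k)))].
  exists [set x | (x == cc c (ir k)) || (e (cc c k) x && e x (cc c (ir k)))].
  split; [|split].
  + move=> x y; rewrite !inE => hx hy xy.
    case/orP: hx => [/eqP ex| /andP [hx1 hx2]]; case/orP: hy => [/eqP ey| /andP [hy1 hy2]].
    * by rewrite ex ey eqxx in xy.
    * by rewrite ex sy.
    * by rewrite ey.
    * by apply: (clqP (il k)) => //; rewrite ?inE ?eqxx //; apply: outl.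
  + move=> x y; rewrite !inE => hx hy xy.
    case/orP: hx => [/eqP ex| /andP [hx1 hx2]]; case/orP: hy => [/eqP ey| /andP [hy1 hy2]].
    * by rewrite ex ey eqxx in xy.
    * by rewrite ex sy.
    * by rewrite ey.
    * by apply: (clqP (ir k)) => //; rewrite ?inE ?eqxx ?orbT //; apply: outr.
  + apply/setP => x; rewrite /nbhd !inE.
    case: (boolP (outside c x)) => ox.
    * have hp := implyP (Hi x) ox; move: hp; rewrite /pendb (trE _ _ _ hk) (trE _ _ _ hl) (trE _ _ _ hr).
      rewrite (negbTE (out_cc ox hl)) (negbTE (out_cc ox hr)) (sy x).
      by case: (e (cc c k) x); case: (e x (cc c (il k))); case: (e x (cc c (ir k))).
    * case/not_out: ox => j hj ->.
      rewrite !(cc_eq hc) // !(ccE hc) //.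
      case/andP: (K3 hk hj) => /negbTE -> /negbTE ->; rewrite !orbF.
      apply/idP/idP => [/(K2 hk hj) //|/orP [/eqP ->|/eqP ->] //].
- have W : forall i : 'I_7, exists p, outside c p && pendb i (tr e c p).
    move=> i; move/existsPn: Hne => /(_ i) /forallPn [p].
    by rewrite negb_imply negbK => H; exists p.
  have [p0 /andP [o0 q0]] := W (@Ordinal 7 0 isT).
  have [p1 /andP [o1 q1]] := W (@Ordinal 7 1 isT).
  have [p2 /andP [o2 q2]] := W (@Ordinal 7 2 isT).
  have [p3 /andP [o3 q3]] := W (@Ordinal 7 3 isT).
  have [p4 /andP [o4 q4]] := W (@Ordinal 7 4 isT).
  have [p5 /andP [o5 q5]] := W (@Ordinal 7 5 isT).
  have [p6 /andP [o6 q6]] := W (@Ordinal 7 6 isT).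
  exfalso; move/negP: AC2; apply.
  apply: (srch_complete (ls := map (tr e c) [:: p0; p1; p2; p3; p4; p5; p6])).
    change [&& tr e c p0 \in [seq s <- VT | pendb 0 s], tr e c p1 \in [seq s <- VT | pendb 1 s],
      tr e c p2 \in [seq s <- VT | pendb 2 s], tr e c p3 \in [seq s <- VT | pendb 3 s],
      tr e c p4 \in [seq s <- VT | pendb 4 s], tr e c p5 \in [seq s <- VT | pendb 5 s],
      tr e c p6 \in [seq s <- VT | pendb 6 s] & true].
    have V := VT_mem hs h1 h2 h3 hc.
    by rewrite (in_PC q0 (V _ o0)) (in_PC q1 (V _ o1)) (in_PC q2 (V _ o2)) (in_PC q3 (V _ o3))
      (in_PC q4 (V _ o4)) (in_PC q5 (V _ o5)) (in_PC q6 (V _ o6)).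
  have oall : all (outside c) [:: p0; p1; p2; p3; p4; p5; p6].
    by rewrite /all o0 o1 o2 o3 o4 o5 o6.
  move=> a b /mapP [p hp ->] /mapP [q hq ->].
  by apply: (compat_tr hs h1 h2 h3 hc); apply: (allP oall).
Qed.

Print Assumptions mainTheorem10.
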